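(* Let $\widetilde{\mathbf S}=\prod_{i=1}^m\widetilde{\mathbf S}_i$ be a semisimple algebra over an algebraically closed field $\mathbbm k$ with simple components $\widetilde{\mathbf S}_i\cong\mathrm{Mat}(d_i,\mathbbm k)$, and let $\mathbf S=\prod_{k=1}^r\mathbf S_k$ be a subalgebra with $\mathbf S_k\cong\mathbbm k$ and $\operatorname{length}_{\mathbf S}(\widetilde{\mathbf S}\otimes_{\mathbf S}\mathbf S_k)\le2$ for all $1\le k\le r$. Then for each $1\le k\le r$ one of the following holds: (1) $\mathbf S_k=\widetilde{\mathbf S}_i$ for some $i$; (2) $\mathbf S_k\subset\widetilde{\mathbf S}_i\times\widetilde{\mathbf S}_j$ for some $i\ne j$ with $\widetilde{\mathbf S}_i\cong\widetilde{\mathbf S}_j\cong\mathbbm k$, and $\mathbf S_k\cong\mathbbm k$ embeds into $\widetilde{\mathbf S}_i\times\widetilde{\mathbf S}_j\cong\mathbbm k\times\mathbbm k$ diagonally; (3) there is an index $q\ne k$ such that $\mathbf S_k\times\mathbf S_q\subset\widetilde{\mathbf S}_i$ for some $i$ with $\widetilde{\mathbf S}_i\cong\mathrm{Mat}(2,\mathbbm k)$, and this isomorphism can be chosen so that $\mathbf S_k\times\mathbf S_q$ embeds into $\widetilde{\mathbf S}_i$ as the subalgebra of diagonal matrices.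
   Context: Algebras are finite-dimensional over $\mathbbm k$. Here $\mathbf S_k$ is regarded as a (simple) left $\mathbf S$-module, and $\widetilde{\mathbf S}\otimes_{\mathbf S}\mathbf S_k$ as a left $\mathbf S$-module by restriction. *)

(* Defs.v *)
From HB Require Import structures.
From mathcomp Require Import all_boot all_order all_algebra.
Set Implicit Arguments. Unset Strict Implicit. Unset Printing Implicit Defensive.
Import GRing.Theory.
Local Open Scope ring_scope.

(* Concrete model of the semisimple algebra  Stil = prod_{i<m} Mat(d_i, K):
   block-diagonal matrices of size \sum_i d_i, the i-th diagonal block being
   the i-th component Mat(d_i, K). *)

Definition Stil_of (K : fieldType) (m : nat) (d : 'I_m -> nat)
  (A : 'M[K]_(\sum_(i < m) d i)) : Prop :=
  exists B : forall i : 'I_m, 'M[K]_(d i), A = mxdiag B.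
Arguments Stil_of {K m} d A.

Definition Stil_comp (K : fieldType) (m : nat) (d : 'I_m -> nat) (i : 'I_m)
  (A : 'M[K]_(\sum_(i < m) d i)) : Prop :=
  exists B : forall l : 'I_m, 'M[K]_(d l),
    (forall l, l != i -> B l = 0) /\ A = mxdiag B.
Arguments Stil_comp {K m} d i A.

(* The subalgebra S = prod_{k<r} S_k, S_k = K e_k, given by its primitive
   idempotents e_k (S is unital in Stil). *)
Definition S_of (K : fieldType) (n r : nat) (e : 'I_r -> 'M[K]_n)
  (s : 'M[K]_n) : Prop :=
  exists c : 'I_r -> K, s = \sum_(l < r) c l *: e l.
Arguments S_of {K n r} e s.

Definition S_comp (K : fieldType) (n r : nat) (e : 'I_r -> 'M[K]_n) (k : 'I_r)
  (s : 'M[K]_n) : Prop :=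
  exists c : K, s = c *: e k.
Arguments S_comp {K n r} e k s.

(* The left S-module  Stil (x)_S S_k, identified with Stil e_k. *)
Definition tensor_Sk (K : fieldType) (m : nat) (d : 'I_m -> nat) (r : nat)
  (e : 'I_r -> 'M[K]_(\sum_(i < m) d i)) (k : 'I_r)
  (x : 'M[K]_(\sum_(i < m) d i)) : Prop :=
  exists a, Stil_of d a /\ x = a *m e k.
Arguments tensor_Sk {K m d r} e k x.

Definition is_submodule (K : fieldType) (n : nat) (S : 'M[K]_n -> Prop)
  (M N : 'M[K]_n -> Prop) : Prop :=
  [/\ (forall x, N x -> M x), N 0,
      (forall x y, N x -> N y -> N (x + y)) &
      (forall s x, S s -> N x -> N (s *m x))].
Arguments is_submodule {K n} S M N.

Definition length_le (K : fieldType) (n : nat) (S : 'M[K]_n -> Prop)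
  (M : 'M[K]_n -> Prop) (t : nat) : Prop :=
  forall (u : nat) (N : nat -> 'M[K]_n -> Prop),
    (forall j, (j <= u)%N -> is_submodule S M (N j)) ->
    (forall j, (j < u)%N ->
       (forall x, N j x -> N j.+1 x) /\ exists x, N j.+1 x /\ ~ N j x) ->
    (u <= t)%N.
Arguments length_le {K n} S M t.

Definition is_alg_iso (K : fieldType) (p q : nat)
  (psi : 'M[K]_p -> 'M[K]_q) : Prop :=
  [/\ bijective psi,
      (forall (a : K) x y, psi (a *: x + y) = a *: psi x + psi y),
      psi 1%:M = 1%:M &
      (forall x y, psi (x *m y) = psi x *m psi y)].
Arguments is_alg_iso {K p q} psi.

(* Main.v *)
Require Import Defs.
From HB Require Import structures.
From mathcomp Require Import all_boot all_order all_algebra.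
Set Implicit Arguments. Unset Strict Implicit. Unset Printing Implicit Defensive.
Import GRing.Theory.
Local Open Scope ring_scope.

Section Blocks.
Variables (K : fieldType) (m : nat) (d : 'I_m -> nat).
Local Notation N := (\sum_(i < m) d i)%N.

Lemma mul_mxdiag (B C : forall i, 'M[K]_(d i)) :
  mxdiag B *m mxdiag C = mxdiag (fun i => B i *m C i).
Proof.
rewrite {1}/mxdiag mul_mxblock_mxdiag /mxdiag; apply/eq_mxblock => i j.
by case: eqVneq => [<-|_]; rewrite ?conform_mx_id ?mul0mx.
Qed.

Lemma scale_mxdiag (c : K) (B : forall i, 'M[K]_(d i)) :
  c *: mxdiag B = mxdiag (fun i => c *: B i).
Proof.
rewrite -mul_scalar_mx -(mxdiagZ (p_ := d)) mul_mxdiag.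
by apply/eq_mxdiag => i; rewrite mul_scalar_mx.
Qed.

Lemma mxdiag_inj (B C : forall i, 'M[K]_(d i)) : mxdiag B = mxdiag C -> forall i, B i = C i.
Proof. by move/eq_mxdiagP. Qed.

Definition blk (i : 'I_m) (Y : 'M[K]_(d i)) : forall l, 'M[K]_(d l) :=
  fun l => if i =P l is ReflectT h then castmx (congr1 d h, congr1 d h) Y else 0.

Arguments blk i Y l : clear implicits.
Lemma blk_id i Y : blk i Y i = Y.
Proof.
rewrite /blk; case: eqP => // h.
by rewrite (eq_irrelevance h erefl) castmx_id.
Qed.

Lemma blk_neq i Y l : l != i -> blk i Y l = 0.
Proof. by move=> nli; rewrite /blk; case: eqP => // h; case: l / h nli; rewrite eqxx. Qed.

Lemma blk_mull i (F : forall l, 'M[K]_(d l)) (Y : 'M[K]_(d i)) l :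
  F l *m blk i Y l = blk i (F i *m Y) l.
Proof.
rewrite /blk; case: eqP => [h|_]; last by rewrite mulmx0.
by case: l / h F => F; rewrite !castmx_id.
Qed.

Lemma blk_mulr i (F : forall l, 'M[K]_(d l)) (Y : 'M[K]_(d i)) l :
  blk i Y l *m F l = blk i (Y *m F i) l.
Proof.
rewrite /blk; case: eqP => [h|_]; last by rewrite mul0mx.
by case: l / h F => F; rewrite !castmx_id.
Qed.

Lemma blkZ i (c : K) (Y : 'M[K]_(d i)) l : c *: blk i Y l = blk i (c *: Y) l.
Proof.
rewrite /blk; case: eqP => [h|_]; last by rewrite scaler0.
by case: l / h; rewrite !castmx_id.
Qed.

End Blocks.
Arguments blk {K m d} i Y l.
Section Chain.
Variables (K : fieldType) (n r : nat) (e : 'I_r -> 'M[K]_n).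
Hypothesis orth : forall k l, e k *m e l = (if k == l then e k else 0).

Lemma S_eigen s (x : 'M[K]_n) lt : S_of e s -> e lt *m x = x ->
  exists a : K, s *m x = a *: x.
Proof.
move=> [c ->] ex; exists (c lt).
rewrite mulmx_suml (bigD1 lt) //= big1 ?addr0.
  by rewrite -scalemxAl ex.
move=> l nl; rewrite -scalemxAl -ex mulmxA orth.
by rewrite (negbTE nl) mul0mx scaler0.
Qed.

Lemma chain3 (M : 'M[K]_n -> Prop) (y : 'I_3 -> 'M[K]_n) (l : 'I_3 -> 'I_r) :
  M 0 -> (forall x z, M x -> M z -> M (x + z)) ->
  (forall s x, S_of e s -> M x -> M (s *m x)) ->
  (forall t, M (y t)) -> (forall t, e (l t) *m y t = y t) ->
  (forall c : 'I_3 -> K, \sum_t c t *: y t = 0 -> forall t, c t = 0) ->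
  ~ length_le (S_of e) M 2.
Proof.
move=> M0 MD MS My ey indep hl.
pose Nj (j : nat) (x : 'M[K]_n) := M x /\ exists c : 'I_3 -> K,
  (forall t : 'I_3, (j <= t)%N -> c t = 0) /\ x = \sum_t c t *: y t.
suff: (3 <= 2)%N by []. apply: (hl 3%N Nj).
- move=> j _; split.
  + by move=> x [].
  + split => //; exists (fun _ => 0); split => //.
    by symmetry; apply: big1 => t _; rewrite scale0r.
  + move=> x z [Mx [c [c0 xE]]] [Mz [c' [c0' zE]]]; split; first exact: MD.
    exists (fun t => c t + c' t); split.
      by move=> t jt; rewrite c0 // c0' // addr0.
    by rewrite xE zE -big_split; apply: eq_bigr => t _; rewrite scalerDl.
  + move=> s x Ss [Mx [c [c0 xE]]]; split.
      exact: MS.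
    case: (Ss) => cs sE.
    pose a t := cs (l t).
    have aE t : s *m y t = a t *: y t.
      rewrite sE mulmx_suml (bigD1 (l t)) //= big1 ?addr0.
        by rewrite -scalemxAl ey.
      move=> l' nl; rewrite -scalemxAl -ey mulmxA orth.
      by rewrite (negbTE nl) mul0mx scaler0.
    exists (fun t => c t * a t); split.
      by move=> t jt; rewrite c0 // mul0r.
    rewrite xE mulmx_sumr; apply: eq_bigr => t _.
    by rewrite -scalemxAr aE scalerA.
- move=> j jl; split.
    move=> x [Mx [c [c0 xE]]]; split => //; exists c; split => //.
    by move=> t jt; apply: c0; apply: ltnW.
  exists (y (Ordinal jl)); split.
    split; first exact: My.
    exists (fun t => (t == Ordinal jl)%:R); split.
      by move=> t jt; case: eqP => // tj; move: jt; rewrite tj /= ltnn.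
    rewrite (bigD1 (Ordinal jl)) //= eqxx scale1r big1 ?addr0 //.
    by move=> t /negbTE ->; rewrite scale0r.
  move=> [_ [c [c0 yE]]].
  have := indep (fun t => c t - (t == Ordinal jl)%:R).
  have -> : \sum_t (c t - (t == Ordinal jl)%:R) *: y t = 0.
    under eq_bigr do rewrite scalerBl.
    rewrite sumrB -yE (bigD1 (Ordinal jl)) //= eqxx scale1r big1 ?addr0 ?subrr //.
    by move=> t /negbTE ->; rewrite scale0r.
  move=> /(_ erefl (Ordinal jl)); rewrite eqxx c0 //= sub0r.
  by move/eqP; rewrite oppr_eq0 oner_eq0.
Qed.

Lemma chain3' (M : 'M[K]_n -> Prop) (y1 y2 y3 : 'M[K]_n) (l1 l2 l3 : 'I_r) :
  M 0 -> (forall x z, M x -> M z -> M (x + z)) ->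
  (forall s x, S_of e s -> M x -> M (s *m x)) ->
  M y1 -> M y2 -> M y3 ->
  e l1 *m y1 = y1 -> e l2 *m y2 = y2 -> e l3 *m y3 = y3 ->
  (forall c1 c2 c3 : K, c1 *: y1 + c2 *: y2 + c3 *: y3 = 0 ->
     [/\ c1 = 0, c2 = 0 & c3 = 0]) ->
  ~ length_le (S_of e) M 2.
Proof.
move=> M0 MD MS M1 M2 M3 e1 e2 e3 ind.
pose y (t : 'I_3) := if val t == 0%N then y1 else if val t == 1%N then y2 else y3.
pose l (t : 'I_3) := if val t == 0%N then l1 else if val t == 1%N then l2 else l3.
apply: (@chain3 M y l) => //.
- by move=> t; rewrite /y; case: ifP => _; last case: ifP.
- by move=> t; rewrite /y /l; case: ifP => _; last case: ifP.
- move=> c; rewrite !big_ord_recl big_ord0 addr0 /= addrA => /ind [c1 c2 c3] t.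
  case: t => [[|[|[|t]]] ht] //.
  + by rewrite -c1; congr c; apply: val_inj.
  + by rewrite -c2; congr c; apply: val_inj.
  + by rewrite -c3; congr c; apply: val_inj.
Qed.

End Chain.
Section EigenRows.
Variables (K : fieldType) (r dd : nat) (F : 'I_r -> 'M[K]_dd).
Hypothesis Fsum : \sum_l F l = 1%:M.
Hypothesis Fid : forall l, F l *m F l = F l.

Lemma eigen_rows nn : (nn <= dd)%N ->
  exists V : 'M[K]_(nn, dd), row_free V /\
    forall t, exists l, row t V *m (F l)^T = row t V.
Proof.
move=> nnd.
pose T := ('I_r * 'I_dd)%type.
pose C : 'M[K]_(#|{:T}|, dd) :=
  \matrix_(s, j) (F (enum_val s).1)^T (enum_val s).2 j.
have rowC s : row s C = row (enum_val s).2 (F (enum_val s).1)^T.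
  by apply/rowP => j; rewrite !mxE.
have sub1 : (1%:M <= C)%MS.
  apply/row_subP => p.
  have -> : row p (1%:M : 'M[K]_dd) = \sum_l row p (F l)^T.
    have -> : (1%:M : 'M[K]_dd) = (\sum_l F l)^T by rewrite Fsum trmx1.
    apply/rowP => j; rewrite !mxE summxE summxE; apply: eq_bigr => l _.
    by rewrite !mxE.
  apply: summx_sub => l _.
  have -> : row p (F l)^T = row (enum_rank ((l, p) : T)) C.
    by rewrite rowC enum_rankK.
  exact: row_sub.
have rkC : (dd <= \rank C)%N.
  by have := mxrankS sub1; rewrite mxrank1.
have h : (nn <= \rank C)%N by apply: leq_trans rkC.
pose g := maxrankfun C.
pose W := rowsub g C.
have Wfree : row_free W by exact: maxrowsub_free.
pose V := rowsub (fun t : 'I_nn => widen_ord h t) W.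
exists V; split.
  apply/inj_row_free => v.
  rewrite /V rowsubE mulmxA => /eqP; rewrite mulmx_free_eq0 // => /eqP v0.
  apply/rowP => t; have := congr1 (fun A : 'rV[K]_(\rank C) => A 0 (widen_ord h t)) v0.
  rewrite !mxE (bigD1 t) //= big1 ?addr0.
    by rewrite !mxE eqxx mulr1.
  move=> s st; rewrite !mxE.
  case: eqP => [/(congr1 val) /= /val_inj sE|]; last by rewrite mulr0.
  by move: st; rewrite sE eqxx.
move=> t; exists (enum_val (g (widen_ord h t))).1.
rewrite /V /W !row_rowsub rowC -row_mul -trmx_mul Fid.
by [].
Qed.

End EigenRows.
Section Small.
Variable K : fieldType.

Lemma mx1_scalar n (A : 'M[K]_n) : n = 1%N -> exists c, A = c%:M.
Proof.
move=> h; subst n; exists (A 0 0).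
by apply/matrixP => i j; rewrite !ord1 !mxE eqxx mulr1n.
Qed.

Lemma mx1_idem n (A : 'M[K]_n) : n = 1%N -> A *m A = A -> A <> 0 -> A = 1%:M.
Proof.
move=> h; have [c ->] := mx1_scalar A h => idA A0.
have : c * c = c.
  have := congr1 (fun M : 'M[K]_n => M) idA.
  rewrite mul_scalar_mx scale_scalar_mx => /eqP.
  subst n => /eqP/matrixP/(_ 0 0); rewrite !mxE eqxx !mulr1n.
  by [].
move=> cc; have : c * (c - 1) == 0 by rewrite mulrBr mulr1 cc subrr.
rewrite mulf_eq0 => /orP[/eqP c0|].
  by case: A0; rewrite c0; apply/matrixP => i j; rewrite !mxE mul0rn.
by rewrite subr_eq0 => /eqP ->.
Qed.

Definition D1 : 'M[K]_(1 + 1) := block_mx 1%:M 0 0 0.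
Definition D2 : 'M[K]_(1 + 1) := block_mx 0 0 0 1%:M.

Lemma D12E (a b : K) : a *: D1 + b *: D2 = block_mx a%:M 0 0 b%:M.
Proof.
rewrite /D1 /D2 !scale_block_mx add_block_mx !scaler0 !addr0 !add0r.
by rewrite !scalemx1.
Qed.

Lemma diag2P (D : 'M[K]_2) : is_diag_mx D <-> exists a b, D = a *: D1 + b *: D2.
Proof.
split.
  move=> Dd; pose D' : 'M[K]_(1 + 1) := D.
  have : is_diag_mx (block_mx (ulsubmx D') (ursubmx D') (dlsubmx D') (drsubmx D')).
    by rewrite submxK.
  rewrite is_diag_block_mx // => /and4P[/eqP ur0 /eqP dl0 _ _].
  exists (ulsubmx D' 0 0), (drsubmx D' 0 0); rewrite D12E.
  by rewrite -!mx11_scalar -{1}ur0 -dl0 submxK.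
move=> [a [b ->]]; rewrite D12E.
have := @is_diag_block_mx K 1 1 1 1 a%:M 0 0 b%:M erefl.
by rewrite !eqxx !scalar_mx_is_diag /= => ->.
Qed.

Lemma col_nz p q (A : 'M[K]_(p, q)) : A <> 0 -> exists c, col c A <> 0.
Proof.
move=> A0; case: (pickP [pred c | col c A != 0]) => [c /= h|h].
  by exists c; apply/eqP.
case: A0; apply/matrixP => i j; move/negbFE/eqP: (h j).
by move/(congr1 (fun v : 'cV[K]_p => v i 0)); rewrite !mxE.
Qed.

Lemma iso2 n (f g : 'M[K]_n) : n = 2%N -> f *m f = f -> g *m g = g ->
  f *m g = 0 -> g *m f = 0 -> f <> 0 -> g <> 0 ->
  exists psi : 'M[K]_n -> 'M[K]_2, is_alg_iso psi /\
    forall D : 'M[K]_2, is_diag_mx D <-> exists a b : K, D = psi (a *: f + b *: g).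
Proof.
move=> h; subst n => ff gg fg gf f0 g0.
have [cu /eqP u0] := col_nz f0; have [cv /eqP v0] := col_nz g0.
set u := col cu f in u0 *; set v := col cv g in v0 *.
have fu : f *m u = u by rewrite /u !colE mulmxA ff.
have gv : g *m v = v by rewrite /v !colE mulmxA gg.
have gu : g *m u = 0 by rewrite -fu mulmxA gf mul0mx.
have fv : f *m v = 0 by rewrite -gv mulmxA fg mul0mx.
pose P : 'M[K]_(2, 1 + 1) := row_mx u v.
have fP : f *m P = P *m D1.
  by rewrite mul_mx_row fu fv /D1 mul_row_block !mulmx0 !mulmx1 !addr0.
have gP : g *m P = P *m D2.
  by rewrite mul_mx_row gu gv /D2 mul_row_block !mulmx0 !mulmx1 !addr0 !add0r.
have Pu : (P : 'M[K]_2) \in unitmx.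
  rewrite -unitmx_tr -row_free_unit; apply/inj_row_free => x xP.
  have : P *m x^T = 0 by rewrite -[LHS]trmxK trmx_mul trmxK xP trmx0.
  rewrite -[x^T](@vsubmxK _ 1 1) mul_row_col.
  set a := usubmx _; set b := dsubmx _ => uv.
  have ua : u *m a = 0.
    have := congr1 (mulmx f) uv.
    by rewrite mulmx0 mulmxDr !mulmxA fu fv mul0mx addr0.
  have vb : v *m b = 0 by move: uv; rewrite ua add0r.
  have a0 : a = 0.
    move: ua; rewrite [a]mx11_scalar mul_mx_scalar => /eqP.
    rewrite scalemx_eq0 (negbTE u0) orbF => /eqP ->.
    by apply/matrixP => i j; rewrite !mxE mul0rn.
  have b0 : b = 0.
    move: vb; rewrite [b]mx11_scalar mul_mx_scalar => /eqP.
    rewrite scalemx_eq0 (negbTE v0) orbF => /eqP ->.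
    by apply/matrixP => i j; rewrite !mxE mul0rn.
  apply: trmx_inj; rewrite trmx0 -[x^T](@vsubmxK _ 1 1) -/a -/b a0 b0.
  by rewrite col_mx0.
exists (fun X => invmx P *m X *m P); split.
  split.
  - exists (fun Y : 'M[K]_2 => (P : 'M[K]_2) *m Y *m invmx P) => X.
      by rewrite !mulmxA mulmxV // mul1mx -mulmxA mulmxV // mulmx1.
    by rewrite !mulmxA mulVmx // mul1mx -mulmxA mulVmx // mulmx1.
  - by move=> a x y; rewrite mulmxDr mulmxDl -scalemxAr -scalemxAl.
  - by rewrite mulmx1 mulVmx.
  - move=> x y; rewrite !mulmxA; congr (_ *m _).
    by rewrite -(mulmxA _ P) mulmxV // mulmx1.
move=> D.
have fE : invmx P *m f *m P = D1 by rewrite -mulmxA fP mulKmx.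
have gE : invmx P *m g *m P = D2 by rewrite -mulmxA gP mulKmx.
suff E : forall a b, invmx P *m (a *: f + b *: g) *m P = a *: D1 + b *: D2.
  split => [/diag2P [a [b ->]]|[a [b ->]]].
    by exists a, b; rewrite E.
  by apply/diag2P; exists a, b; rewrite E.
by move=> a b; rewrite mulmxDr mulmxDl -!scalemxAr -!scalemxAl fE gE.
Qed.

End Small.
Section Main.
Variables (K : fieldType) (m : nat) (d : 'I_m -> nat) (r : nat).
Variable (e : 'I_r -> 'M[K]_(\sum_(i < m) d i)).
Hypothesis eS : forall k, Stil_of d (e k).
Hypothesis orth : forall k l, e k *m e l = (if k == l then e k else 0).
Hypothesis esum : \sum_(k < r) e k = 1%:M.

Definition E l i : 'M[K]_(d i) := submxblock (e l) i i.

Lemma eE l : e l = mxdiag (E l).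
Proof.
rewrite /E; case: (eS l) => B ->; apply/eq_mxdiag => i.
by rewrite submxblock_diag.
Qed.

Lemma EE k l i : E k i *m E l i = (if k == l then E k i else 0).
Proof.
have := orth k l; rewrite !eE mul_mxdiag.
have -> : (if k == l then mxdiag (E k) else 0) =
          mxdiag (fun i => if k == l then E k i else 0).
  by case: eqP => _ //; rewrite mxdiag0.
by move/mxdiag_inj.
Qed.

Lemma Eid k i : E k i *m E k i = E k i.
Proof. by rewrite EE eqxx. Qed.

Lemma Esum i : \sum_l E l i = 1%:M.
Proof.
have : \sum_l mxdiag (E l) = mxdiag (fun i => (1%:M : 'M[K]_(d i))).
  by rewrite mxdiagZ -esum; apply: eq_bigr => l _; rewrite eE.
rewrite -mxdiag_sum => /mxdiag_inj; apply.
Qed.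

Lemma S_Stil s : S_of e s -> Stil_of d s.
Proof.
move=> [c ->]; exists (fun i => \sum_l c l *: E l i).
rewrite mxdiag_sum; apply: eq_bigr => l _.
by rewrite eE scale_mxdiag.
Qed.

Section Fixk.
Variable k : 'I_r.
Local Notation M := (tensor_Sk e k).

Lemma M0 : M 0.
Proof. by exists 0; split; [exists (fun _ => 0); rewrite mxdiag0 | rewrite mul0mx]. Qed.

Lemma MD x z : M x -> M z -> M (x + z).
Proof.
move=> [a [[B aE] ->]] [a' [[B' aE'] ->]]; exists (a + a'); split.
  by exists (fun i => B i + B' i); rewrite mxdiagD aE aE'.
by rewrite mulmxDl.
Qed.

Lemma MS s x : S_of e s -> M x -> M (s *m x).
Proof.
move=> /S_Stil [C sE] [a [[B aE] ->]]; exists (s *m a); split.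
  by exists (fun i => C i *m B i); rewrite sE aE mul_mxdiag.
by rewrite mulmxA.
Qed.

Definition yb i (Y : 'M[K]_(d i)) := mxdiag (blk i Y).
Arguments yb : clear implicits.

Lemma yb_M i Y : Y *m E k i = Y -> M (yb i Y).
Proof.
move=> YE; exists (yb i Y); split; first by exists (blk i Y).
rewrite /yb eE mul_mxdiag; apply/eq_mxdiag => l.
by rewrite blk_mulr YE.
Qed.

Lemma yb_eig l i Y : E l i *m Y = Y -> e l *m yb i Y = yb i Y.
Proof.
move=> YE; rewrite /yb eE mul_mxdiag; apply/eq_mxdiag => j.
by rewrite blk_mull YE.
Qed.

Lemma comb3 i1 i2 i3 (Y1 : 'M[K]_(d i1)) (Y2 : 'M[K]_(d i2)) (Y3 : 'M[K]_(d i3)) c1 c2 c3 :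
  c1 *: yb i1 Y1 + c2 *: yb i2 Y2 + c3 *: yb i3 Y3 = 0 ->
  forall j, c1 *: blk i1 Y1 j + c2 *: blk i2 Y2 j + c3 *: blk i3 Y3 j = 0.
Proof.
rewrite /yb !scale_mxdiag -!mxdiagD -(mxdiag0 (p_ := d)) => /mxdiag_inj.
by [].
Qed.

Lemma combn nn (B : 'I_nn -> forall j, 'M[K]_(d j)) (c : 'I_nn -> K) :
  \sum_t c t *: mxdiag (B t) = 0 -> forall j, \sum_t c t *: B t j = 0.
Proof.
move=> h.
have : mxdiag (fun j => \sum_t c t *: B t j) = mxdiag (fun j => (0 : 'M[K]_(d j))).
  rewrite mxdiag_sum mxdiag0 -[RHS]h; apply: eq_bigr => t _.
  by rewrite scale_mxdiag.
by move/mxdiag_inj.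
Qed.

Hypothesis hl : length_le (S_of e) M 2.

Lemma scal_nz n1 n2 (c : K) (A : 'M[K]_(n1, n2)) : A <> 0 -> c *: A = 0 -> c = 0.
Proof. by move=> A0 /eqP; rewrite scalemx_eq0 => /orP[/eqP//|/eqP]. Qed.

Lemma badA i1 i2 i3 : i1 != i2 -> i1 != i3 -> i2 != i3 ->
  E k i1 <> 0 -> E k i2 <> 0 -> E k i3 <> 0 -> False.
Proof.
move=> n12 n13 n23 h1 h2 h3.
apply: (@chain3' _ _ _ e orth M (yb i1 (E k i1)) (yb i2 (E k i2)) (yb i3 (E k i3)) k k k)
  => //; try exact: M0; try exact: MD; try exact: MS;
  try (by apply: yb_M; rewrite Eid); try (by apply: yb_eig; rewrite Eid).
move=> c1 c2 c3 /comb3 H.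
have n21 : i2 != i1 by rewrite eq_sym.
have n31 : i3 != i1 by rewrite eq_sym.
have n32 : i3 != i2 by rewrite eq_sym.
have := H i1; rewrite blk_id (blk_neq _ n12) (blk_neq _ n13) !scaler0 !addr0.
move=> /(scal_nz h1) ->.
have := H i2; rewrite blk_id (blk_neq _ n21) (blk_neq _ n23) !scaler0 addr0 add0r.
move=> /(scal_nz h2) ->.
have := H i3; rewrite blk_id (blk_neq _ n31) (blk_neq _ n32) !scaler0 !add0r.
by move=> /(scal_nz h3) ->.
Qed.

Lemma row_nz p q (A : 'M[K]_(p, q)) : A <> 0 -> exists a, row a A <> 0.
Proof.
move=> A0; case: (pickP [pred a | row a A != 0]) => [a /= h|h].
  by exists a; apply/eqP.
case: A0; apply/matrixP => i j; move/negbFE/eqP: (h i).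
by move/(congr1 (fun v : 'rV[K]_q => v 0 j)); rewrite !mxE.
Qed.

Lemma rank1_0 p q (w : 'cV[K]_p) (rho : 'rV[K]_q) : rho <> 0 -> w *m rho = 0 -> w = 0.
Proof.
move=> r0 h; have [j rj] : exists j, rho 0 j != 0.
  case: (pickP [pred j | rho 0 j != 0]) => [j /= hj|hj]; first by exists j.
  by case: r0; apply/matrixP => a b; rewrite ord1; move/negbFE/eqP: (hj b); rewrite mxE.
apply/matrixP => a b; rewrite ord1.
have := congr1 (fun A : 'M[K]_(p, q) => A a j) h; rewrite !mxE big_ord1.
by move/eqP; rewrite mulf_eq0 (negbTE rj) orbF => /eqP ->.
Qed.

Lemma block_eig i nn : E k i <> 0 -> (nn <= d i)%N ->
  exists (Y : 'I_nn -> 'M[K]_(d i)) (lab : 'I_nn -> 'I_r),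
    [/\ (forall t, Y t *m E k i = Y t),
        (forall t, E (lab t) i *m Y t = Y t) &
        (forall c : 'I_nn -> K, \sum_t c t *: Y t = 0 -> forall t, c t = 0)].
Proof.
move=> f0 hn.
have [V [Vfree Veig]] := eigen_rows (Esum i) (fun l => Eid l i) hn.
have [a rho0] := row_nz f0.
set rho := row a (E k i) in rho0.
have rhoE : rho *m E k i = rho by rewrite /rho -row_mul Eid.
have Veig' t : exists l, row t V *m (E l i)^T == row t V.
  by have [l hl'] := Veig t; exists l; apply/eqP.
pose lab t := xchoose (Veig' t).
exists (fun t => (row t V)^T *m rho), lab; split.
- by move=> t; rewrite -mulmxA rhoE.
- move=> t; rewrite mulmxA; congr (_ *m _).
  by rewrite -[LHS]trmxK trmx_mul trmxK (eqP (xchooseP (Veig' t))).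
- move=> c hc.
  have h0 : ((\row_t c t) *m V)^T *m rho = 0.
    rewrite mulmx_sum_row linear_sum mulmx_suml -[RHS]hc; apply: eq_bigr => t _.
    by rewrite linearZ /= -scalemxAl mxE.
  have /eqP := rank1_0 rho0 h0; rewrite trmx_eq0 mulmx_free_eq0 // => /eqP c0 t.
  by have := congr1 (fun v : 'rV[K]_nn => v 0 t) c0; rewrite !mxE.
Qed.

Lemma badB i j : i != j -> E k i <> 0 -> E k j <> 0 -> (2 <= d i)%N -> False.
Proof.
move=> nij fi fj hd.
have [Y [lab [YE Yeig Yind]]] := block_eig fi hd.
pose o1 : 'I_2 := lift ord0 ord0.
apply: (@chain3' _ _ _ e orth M (yb i (Y ord0)) (yb i (Y o1)) (yb j (E k j))
  (lab ord0) (lab o1) k) => //; try exact: M0; try exact: MD; try exact: MS;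
  try (by apply: yb_M; rewrite ?Eid ?YE); try (by apply: yb_eig; rewrite ?Eid ?Yeig).
move=> c1 c2 c3 /comb3 H.
have nji : j != i by rewrite eq_sym.
have := H j; rewrite blk_id !(blk_neq _ nji) !scaler0 !add0r => /(scal_nz fj) c30.
have := H i; rewrite !blk_id (blk_neq _ nij) scaler0 addr0 => h.
have := Yind (fun t => if t == ord0 then c1 else c2).
rewrite !big_ord_recl big_ord0 addr0 /= => /(_ h) cc.
split => //; first by have := cc ord0.
by have := cc o1; rewrite /o1 eq_sym (negbTE (neq_lift ord0 ord0)).
Qed.

Lemma badC i : E k i <> 0 -> (3 <= d i)%N -> False.
Proof.
move=> fi hd.
have [Y [lab [YE Yeig Yind]]] := block_eig fi hd.
apply: (@chain3 _ _ _ e orth M (fun t => yb i (Y t)) lab) => //.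
- exact: M0.
- exact: MD.
- exact: MS.
- by move=> t; apply: yb_M; rewrite YE.
- by move=> t; apply: yb_eig; rewrite Yeig.
- move=> c /(@combn 3 (fun t => blk i (Y t))) /(_ i) h; apply: Yind; rewrite -[RHS]h.
  by apply: eq_bigr => t _; rewrite blk_id.
Qed.

Lemma badD i : d i = 2%N -> E k i = 1%:M -> False.
Proof.
move=> hd f1.
have h0 : (0 < d i)%N by rewrite hd.
have h1 : (1 < d i)%N by rewrite hd.
pose o0 := Ordinal h0; pose o1 := Ordinal h1.
have n01 : (o0 == o1) = false by [].
have n10 : (o1 == o0) = false by [].
apply: (@chain3' _ _ _ e orth M (yb i (delta_mx o0 o0)) (yb i (delta_mx o0 o1))
  (yb i (delta_mx o1 o0)) k k k) => //; try exact: M0; try exact: MD; try exact: MS;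
  try (by apply: yb_M; rewrite f1 mulmx1); try (by apply: yb_eig; rewrite f1 mul1mx).
move=> c1 c2 c3 /comb3 /(_ i); rewrite !blk_id => h.
have := congr1 (fun A : 'M[K]_(d i) => A o0 o0) h.
have := congr1 (fun A : 'M[K]_(d i) => A o0 o1) h.
have := congr1 (fun A : 'M[K]_(d i) => A o1 o0) h.
rewrite !mxE !eqxx n01 n10 /= !mulr1n !mulr0n !mulr0 !mulr1 !addr0 !add0r.
by move=> -> -> ->.
Qed.

End Fixk.
Hypothesis dpos : forall i, (0 < d i)%N.
Hypothesis e0 : forall k, e k <> 0.
Hypothesis hlen : forall k, length_le (S_of e) (tensor_Sk e k) 2.

Theorem main_k (k : 'I_r) :
    (exists i : 'I_m,
       forall A, S_comp e k A <-> Stil_comp d i A)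
    \/
    (exists i j : 'I_m, [/\ i != j, d i = 1%N, d j = 1%N &
       e k = mxdiag (fun l : 'I_m =>
               (if (l == i) || (l == j) then 1%:M else 0 : 'M[K]_(d l)))])
    \/
    (exists (q : 'I_r) (i : 'I_m), q != k /\ d i = 2%N /\
       exists (Bk Bq : forall l : 'I_m, 'M[K]_(d l)),
         [/\ forall l, l != i -> Bk l = 0,
             forall l, l != i -> Bq l = 0,
             e k = mxdiag Bk,
             e q = mxdiag Bq &
             exists psi : 'M[K]_(d i) -> 'M[K]_2,
               is_alg_iso psi /\
               forall D : 'M[K]_2,
                 is_diag_mx D <->
                 exists a b : K, D = psi (a *: Bk i + b *: Bq i)]).
Proof.
have hk := @hlen k.
have [i fi] : exists i, E k i <> 0.
  case: (pickP [pred i | E k i != 0]) => [i /= /eqP h|h]; first by exists i.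
  case: (@e0 k); rewrite eE -(mxdiag0 (p_ := d)); apply/eq_mxdiag => j.
  by apply/eqP; move/negbFE: (h j).
case: (pickP [pred j | (j != i) && (E k j != 0)]) => [j /= /andP[nji /eqP fj]|noj].
  right; left.
  have nij : i != j by rewrite eq_sym.
  have di1 : d i = 1%N.
    have := dpos i; case: (leqP 2 (d i)) => [h2|h2 h0].
      by case: (badB hk nij fi fj h2).
    by apply/eqP; rewrite eqn_leq h0 -ltnS h2.
  have dj1 : d j = 1%N.
    have := dpos j; case: (leqP 2 (d j)) => [h2|h2 h0].
      by case: (badB hk nji fj fi h2).
    by apply/eqP; rewrite eqn_leq h0 -ltnS h2.
  have others l : l != i -> l != j -> E k l = 0.
    move=> nli nlj; case: (eqVneq (E k l) 0) => // /eqP fl.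
    have nil : i != l by rewrite eq_sym.
    have njl : j != l by rewrite eq_sym.
    by case: (badA hk nij nil njl fi fj fl).
  have Ei1 : E k i = 1%:M by apply: mx1_idem => //; apply: Eid.
  have Ej1 : E k j = 1%:M by apply: mx1_idem => //; apply: Eid.
  exists i, j; split => //; rewrite eE; apply/eq_mxdiag => l.
  case: (eqVneq l i) => [->|nli]; first exact: Ei1.
  case: (eqVneq l j) => [->|nlj]; first by rewrite orbT; exact: Ej1.
  exact: others.
have others j : j != i -> E k j = 0.
  by move=> nji; move/negbT: (noj j); rewrite /= negb_and nji /= negbK => /eqP.
have := dpos i; case: (leqP 3 (d i)) => [h3|h3 h0].
  by case: (badC hk fi h3).
have [di1|di2] : d i = 1%N \/ d i = 2%N.
    by move: h0 h3; case: (d i) => [|[|[|]]] //; auto.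
  left; have Ei1 : E k i = 1%:M by apply: mx1_idem => //; apply: Eid.
  exists i => A; split.
    move=> [c ->]; exists (fun l => c *: E k l); split.
      by move=> l nl; rewrite others // scaler0.
    by rewrite eE scale_mxdiag.
  move=> [B [Bz ->]]; have [c Bc] := mx1_scalar (B i) di1.
  exists c; rewrite eE scale_mxdiag; apply/eq_mxdiag => l.
  case: (eqVneq l i) => [->|nl]; first by rewrite Bc Ei1 scalemx1.
  by rewrite Bz // others // scaler0.
right; right.
have fn1 : E k i <> 1%:M by move/(badD hk di2).
have [q [nqk gq]] : exists q, q != k /\ E q i <> 0.
  case: (pickP [pred q | (q != k) && (E q i != 0)]) => [q /= /andP[nq /eqP gq]|noq].
    by exists q.
  case: fn1; rewrite -(Esum i) (bigD1 k) //= big1 ?addr0 // => q nq.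
  by move/negbT: (noq q); rewrite /= negb_and nq /= negbK => /eqP.
have gothers j : j != i -> E q j = 0.
  move=> nji; case: (eqVneq (E q j) 0) => // /eqP gj.
  have nij : i != j by rewrite eq_sym.
  by case: (badB (@hlen q) nij gq gj); rewrite di2.
exists q, i; split => //; split => //.
exists (E k), (E q); split => //; try exact: eE.
apply: iso2 => //; try exact: Eid.
- by rewrite EE eq_sym (negbTE nqk).
- by rewrite EE (negbTE nqk).
Qed.

End Main.

Unset Implicit Arguments.

Theorem lemma1p9 (K : closedFieldType) (m : nat) (d : 'I_m -> nat)
  (r : nat) (e : 'I_r -> 'M[K]_(\sum_(i < m) d i)) :
  (forall i, (0 < d i)%N) ->
  (forall k, Stil_of d (e k)) ->
  (forall k, e k <> 0) ->
  (forall k l, e k *m e l = (if k == l then e k else 0)) ->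
  \sum_(k < r) e k = 1%:M ->
  (forall k, length_le (S_of e) (tensor_Sk e k) 2) ->
  forall k : 'I_r,
    (* (1) S_k = Stil_i *)
    (exists i : 'I_m,
       forall A, S_comp e k A <-> Stil_comp d i A)
    \/
    (* (2) S_k diagonally embedded in Stil_i x Stil_j = K x K *)
    (exists i j : 'I_m, [/\ i != j, d i = 1%N, d j = 1%N &
       e k = mxdiag (fun l : 'I_m =>
               (if (l == i) || (l == j) then 1%:M else 0 : 'M[K]_(d l)))])
    \/
    (* (3) S_k x S_q inside Stil_i = Mat(2,K) as the diagonal matrices *)
    (exists (q : 'I_r) (i : 'I_m), q != k /\ d i = 2%N /\
       exists (Bk Bq : forall l : 'I_m, 'M[K]_(d l)),
         [/\ forall l, l != i -> Bk l = 0,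
             forall l, l != i -> Bq l = 0,
             e k = mxdiag Bk,
             e q = mxdiag Bq &
             exists psi : 'M[K]_(d i) -> 'M[K]_2,
               is_alg_iso psi /\
               forall D : 'M[K]_2,
                 is_diag_mx D <->
                 exists a b : K, D = psi (a *: Bk i + b *: Bq i)]).
Proof.
move=> dpos eS e0 orth esum hlen k.
exact: (main_k eS orth esum dpos e0 hlen k).
Qed.
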